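(* Let $S=\{0,1,\dots,p-1\}$ with $p\ge 2$, let $m\ge 2$, and let $f:S^m\to S$ be a local rule. The global map $\tau$ is injective if and only if there exists neither a pair of replaceable local configurations nor a pair of periodic local configurations for $f$.
   Context: A local configuration is a finite word over $S$. For a word $w=w_1w_2\cdots w_n$ with $n\ge m$, its successor under $f$ is the word $\hat f(w)=u_1\cdots u_{n-m+1}$ with $u_j=f(w_j,w_{j+1},\dots,w_{j+m-1})$. For $k\le n$, $\mathrm{left}_k(w)=w_1\cdots w_k$ and $\mathrm{right}_k(w)=w_{n-k+1}\cdots w_n$. The global map is $\tau:S^{\mathbb Z}\to S^{\mathbb Z}$, $\tau(c)(i)=f(c(i-L),\dots,c(i+R))$ for fixed integers $L,R\ge 0$ with $L+1+R=m$; the CA is (globally) injective if $\tau$ is injective. Two local configurations $\alpha,\beta$ of the same length $n$ are replaceable if: $n\ge 2m-1$; $\alpha\ne\beta$; $\mathrm{left}_{m-1}(\alpha)=\mathrm{left}_{m-1}(\beta)$; $\mathrm{right}_{m-1}(\alpha)=\mathrm{right}_{m-1}(\beta)$; and $\hat f(\alpha)=\hat f(\beta)$. They are periodic if: $n\ge m$; $\alpha\ne\beta$; $\mathrm{left}_{m-1}(\alpha)=\mathrm{right}_{m-1}(\alpha)$; $\mathrm{left}_{m-1}(\beta)=\mathrm{right}_{m-1}(\beta)$; and $\hat f(\alpha)=\hat f(\beta)$. *)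

(* Defs.v *)
From mathcomp Require Import all_boot all_algebra.
Set Implicit Arguments. Unset Strict Implicit. Unset Printing Implicit Defensive.
Import GRing.Theory.

(* Successor of a finite word: apply f to each length-m window w_j...w_{j+m-1},
   j = 1..n-m+1 (every window has size m when size w >= m). *)
Definition succ_word (p m : nat) (f : m.-tuple 'I_p -> 'I_p) (w : seq 'I_p) : seq 'I_p :=
  [seq f t | t <- pmap (fun s : seq 'I_p => insub s : option (m.-tuple 'I_p))
                     [seq take m (drop j w) | j <- iota 0 (size w - m).+1]].

Definition left_k (p k : nat) (w : seq 'I_p) : seq 'I_p := take k w.
Definition right_k (p k : nat) (w : seq 'I_p) : seq 'I_p := drop (size w - k) w.

(* Global map: tau(c)(i) = f(c(i-L), ..., c(i+R)), with L+1+R = m. *)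
Definition global_map (p m : nat) (f : m.-tuple 'I_p -> 'I_p) (L : nat)
  (c : int -> 'I_p) : int -> 'I_p :=
  fun i => f (mktuple (fun k : 'I_m => c (i - L%:Z + (k : nat)%:Z)%R)).

Definition replaceable (p m : nat) (f : m.-tuple 'I_p -> 'I_p) (a b : seq 'I_p) : Prop :=
  [/\ (size a = size b /\ (2 * m - 1 <= size a)%N), a <> b,
      left_k (m - 1) a = left_k (m - 1) b,
      right_k (m - 1) a = right_k (m - 1) b
    & succ_word f a = succ_word f b].

Definition periodic_pair (p m : nat) (f : m.-tuple 'I_p -> 'I_p) (a b : seq 'I_p) : Prop :=
  [/\ (size a = size b /\ (m <= size a)%N), a <> b,
      left_k (m - 1) a = right_k (m - 1) a,
      left_k (m - 1) b = right_k (m - 1) b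
    & succ_word f a = succ_word f b].

(* Main.v *)
Require Import Defs.
From mathcomp Require Import all_boot all_algebra zify.
From Stdlib Require Import FunctionalExtensionality.
Import GRing.Theory.
Set Implicit Arguments. Unset Strict Implicit. Unset Printing Implicit Defensive.

Definition word (p : nat) (c : int -> 'I_p) (i : int) (n : nat) : seq 'I_p :=
  mkseq (fun k => c (i + k%:Z)%R) n.

Lemma size_word p c i n : size (@word p c i n) = n.
Proof. by rewrite size_mkseq. Qed.

Lemma nth_word p c i n x0 k : (k < n)%N -> nth x0 (@word p c i n) k = c (i + k%:Z)%R.
Proof. by move=> hk; rewrite nth_mkseq. Qed.

Lemma take_word p c i n k : (k <= n)%N -> take k (@word p c i n) = word c i k.
Proof.
move=> hk; have x0 := c i.
apply: (eq_from_nth (x0 := x0)); first by rewrite size_takel ?size_word.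
move=> j; rewrite size_takel ?size_word // => hj.
rewrite nth_take; last by lia.
by rewrite !nth_word //; lia.
Qed.

Lemma drop_word p c i n k : drop k (@word p c i n) = word c (i + k%:Z)%R (n - k).
Proof.
have x0 := c i.
apply: (eq_from_nth (x0 := x0)); first by rewrite size_drop !size_word.
move=> j; rewrite size_drop size_word => hj.
rewrite nth_drop !nth_word; [|lia|lia].
congr c; rewrite -addrA; congr (_ + _)%R; lia.
Qed.

Lemma map_pmap_insub p m (f : m.-tuple 'I_p -> 'I_p) (h : nat -> seq 'I_p)
   (g : nat -> 'I_p) (s : seq nat) :
  (forall j, j \in s -> size (h j) = m) ->
  (forall j, j \in s -> forall t : m.-tuple 'I_p, val t = h j -> f t = g j) ->
  [seq f t | t <- pmap (fun s : seq 'I_p => insub s : option (m.-tuple 'I_p)) (map h s)]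
  = map g s.
Proof.
elim: s => [|x s IH] Hsz H //=.
have Hs : size (h x) == m by rewrite Hsz ?mem_head.
rewrite (insubT (fun s : seq _ => size s == m) Hs) /=.
rewrite (H x (mem_head _ _) _ (SubK _ _)) IH // => j hj.
  by apply: Hsz; rewrite in_cons hj orbT.
by apply: H; rewrite in_cons hj orbT.
Qed.

Lemma succ_word_word p m (f : m.-tuple 'I_p -> 'I_p) L c i n : (m <= n)%N ->
  succ_word f (word c i n) =
  mkseq (fun j => global_map f L c (i + j%:Z + L%:Z)%R) (n - m).+1.
Proof.
move=> hmn; rewrite /succ_word size_word /mkseq.
have -> : [seq take m (drop j (word c i n)) | j <- iota 0 (n-m).+1] =
    [seq word c (i + j%:Z)%R m | j <- iota 0 (n - m).+1].
  apply/eq_in_map => j; rewrite mem_iota => /andP [_ hj].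
  by rewrite drop_word take_word //; lia.
apply: map_pmap_insub => j hj; first by rewrite size_word.
move=> t ht; rewrite /global_map; congr f.
apply: eq_from_tnth => k; rewrite tnth_mktuple (tnth_nth (c i)) ht nth_word //.
congr c; by rewrite addrK.
Qed.
Lemma modz_natex (x : int) (k : nat) : (0 < k)%N -> exists r : nat, (r < k)%N /\ ((x %% k%:Z)%Z = r%:Z)%R.
Proof.
move=> hk; have h1 := modz_ge0 x (d:=(k%:Z)%R).
have h2 := ltz_pmod x (d:=(k%:Z)%R).
case E: (x %% (k%:Z)%R)%Z h1 h2 => [r|r] h1 h2.
  by exists r; split => //; rewrite -ltz_nat h2 // ltz_nat.
by exfalso; have := h1 ltac:(by rewrite eqz_nat; lia).
Qed.

Definition ext p (a0 : 'I_p) (a : seq 'I_p) (z : int) : 'I_p :=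
  match z with Posz k => nth a0 a k | Negz _ => a0 end.

Lemma word_ext p (a0 : 'I_p) a : word (ext a0 a) 0 (size a) = a.
Proof.
apply: (eq_from_nth (x0 := a0)); first by rewrite size_word.
by move=> j; rewrite size_word => hj; rewrite nth_word // add0r.
Qed.

Lemma gm_congr p m (f : m.-tuple 'I_p -> 'I_p) L c c' x x' :
  (forall k : 'I_m, c (x - L%:Z + (k : nat)%:Z)%R = c' (x' - L%:Z + (k : nat)%:Z)%R) ->
  global_map f L c x = global_map f L c' x'.
Proof. by move=> H; rewrite /global_map; congr f; apply: eq_mktuple. Qed.

Lemma succ_ext p m (f : m.-tuple 'I_p -> 'I_p) L (a0 : 'I_p) a r :
  (m <= size a)%N -> (r <= size a - m)%N ->
  global_map f L (ext a0 a) (r%:Z + L%:Z)%R = nth a0 (succ_word f a) r.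
Proof.
move=> h1 h2; rewrite -{2}(word_ext a0 a) (succ_word_word f L) // nth_mkseq // add0r.
Qed.

Lemma nth_lr p (a0 : 'I_p) a b k : size a = size b -> take k a = take k b ->
  drop (size a - k) a = drop (size b - k) b ->
  forall j, (j < k)%N || (size a - k <= j)%N -> nth a0 a j = nth a0 b j.
Proof.
move=> hs hl hr j /orP [hj|hj].
  by rewrite -(nth_take a0 hj a) -(nth_take a0 hj b) hl.
case: (leqP (size a) j) => hja.
  by rewrite !nth_default // -hs.
have -> : j = (size a - k + (j - (size a - k)))%N by lia.
rewrite -!nth_drop hr -hs //.
Qed.

Lemma per_nth p (a0 : 'I_p) a m : (m <= size a)%N -> (0 < m)%N ->
  take (m-1) a = drop (size a - (m-1)) a ->
  forall j, (j < size a)%N -> nth a0 a (j %% (size a - m).+1) = nth a0 a j.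
Proof.
move=> h1 h2 hp j; elim/ltn_ind: j => j IH hj.
set k := (size a - m).+1.
case: (ltnP j k) => hjk; first by rewrite modn_small.
have E : j = (j - k + k)%N by lia.
rewrite E modnDr IH; [|lia|lia].
have hk : (size a - (m - 1) = k)%N by rewrite /k; lia.
have hlt : (j - k < m - 1)%N by rewrite /k; lia.
rewrite -(nth_take a0 hlt) hp nth_drop hk; congr nth; lia.
Qed.

Lemma repl_not_inj p m (f : m.-tuple 'I_p -> 'I_p) L (a0 : 'I_p) a b :
  (1 <= m)%N -> replaceable f a b -> injective (global_map f L) -> False.
Proof.
move=> hm [[hs hn] hab hl hr hsucc] inj.
rewrite /left_k /right_k in hl hr.
have E : ext a0 a = ext a0 b.
  apply: inj; apply: functional_extensionality => x.
  case Ey: (x - L%:Z)%R => [r|r].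
  - case: (leqP (r + m) (size a)) => hrm.
    + have -> : x = (r%:Z + L%:Z)%R by move: Ey; lia.
      rewrite !succ_ext ?hsucc //; lia.
    + apply: gm_congr => k; rewrite Ey -PoszD /=.
      apply: (@nth_lr _ a0 a b (m-1)) => //; apply/orP; right; have := ltn_ord k; lia.
  - apply: gm_congr => k; rewrite Ey.
    case E2: (Negz r + (k : nat)%:Z)%R => [j|j] //=.
    apply: (@nth_lr _ a0 a b (m-1)) => //; apply/orP; left; have := ltn_ord k; move: E2; rewrite NegzE; lia.
apply: hab; by rewrite -(word_ext a0 a) -(word_ext a0 b) E hs.
Qed.

Definition cper p (a0 : 'I_p) (a : seq 'I_p) (k : nat) (z : int) : 'I_p :=
  nth a0 a (absz (z %% (k%:Z)%R)%Z).

Lemma cper_eq p m (f : m.-tuple 'I_p -> 'I_p) L (a0 : 'I_p) a x r :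
  (1 <= m)%N -> (m <= size a)%N -> take (m-1) a = drop (size a - (m-1)) a ->
  (r < (size a - m).+1)%N -> (((x - L%:Z) %% ((size a - m).+1)%:Z)%Z = r%:Z)%R ->
  global_map f L (cper a0 a (size a - m).+1) x = global_map f L (ext a0 a) (r%:Z + L%:Z)%R.
Proof.
move=> hm h1 hp hr Er.
apply: gm_congr => k; rewrite addrK -PoszD /= /cper.
rewrite -modzDml Er -PoszD modz_nat /= per_nth //.
have := ltn_ord k; lia.
Qed.

Lemma per_not_inj p m (f : m.-tuple 'I_p -> 'I_p) L (a0 : 'I_p) a b :
  (1 <= m)%N -> periodic_pair f a b -> injective (global_map f L) -> False.
Proof.
move=> hm [[hs hn] hab hl hr hsucc] inj.
rewrite /left_k /right_k in hl hr.
have hnb : (m <= size b)%N by rewrite -hs.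
have E : cper a0 a (size a - m).+1 = cper a0 b (size a - m).+1.
  apply: inj; apply: functional_extensionality => x.
  have [r [hr1 Er]] := modz_natex (x - L%:Z)%R (ltn0Sn (size a - m)).
  rewrite (@cper_eq p m f L a0 a x r hm hn hl hr1 Er).
  rewrite hs in hr1 Er *; rewrite (@cper_eq p m f L a0 b x r hm hnb hr hr1 Er).
  by rewrite !succ_ext // ?hsucc // -?hs; lia.
apply: hab; apply: (eq_from_nth (x0 := a0)) => // j hj.
rewrite -(per_nth a0 hn hm hl hj) -[RHS](per_nth a0 _ hm hr); [|lia|lia].
move: (congr1 (fun c => c (j%:Z)%R) E); rewrite /cper modz_nat /= hs //.
Qed.

Definition NT p m := #|{: ((m-1).-tuple 'I_p * (m-1).-tuple 'I_p)%type}|.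

Lemma word_eq_tuple p m (c : int -> 'I_p) (x y : int) :
  mktuple (fun k : 'I_(m-1) => c (x + (k : nat)%:Z)%R) =
  mktuple (fun k : 'I_(m-1) => c (y + (k : nat)%:Z)%R) ->
  word c x (m-1) = word c y (m-1).
Proof.
move=> E; apply: (eq_from_nth (x0 := c x)); first by rewrite !size_word.
move=> j; rewrite size_word => hj; rewrite !nth_word //.
by have := congr1 (fun t => tnth t (Ordinal hj)) E; rewrite !tnth_mktuple.
Qed.

Lemma per_exists p m (f : m.-tuple 'I_p -> 'I_p) L c1 c2 (b : int) :
  (1 <= m)%N -> global_map f L c1 = global_map f L c2 ->
  (forall t : 'I_(NT p m).+1,
      word c1 (b + (t : nat)%:Z)%R (m-1) != word c2 (b + (t : nat)%:Z)%R (m-1)) ->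
  exists a b, periodic_pair f a b.
Proof.
move=> hm Ht Hneq.
pose g := fun t : 'I_(NT p m).+1 =>
  (mktuple (fun k : 'I_(m-1) => c1 (b + (t : nat)%:Z + (k : nat)%:Z)%R),
   mktuple (fun k : 'I_(m-1) => c2 (b + (t : nat)%:Z + (k : nat)%:Z)%R)).
have key : forall u v : 'I_(NT p m).+1, (u < v)%N -> g u = g v ->
    exists a b, periodic_pair f a b.
  move=> u v huv; rewrite /g => E.
  have W1 := word_eq_tuple (congr1 fst E); have W2 := word_eq_tuple (congr1 snd E).
  pose D := (v - u)%N.
  exists (word c1 (b + (u : nat)%:Z)%R (D + (m-1))), (word c2 (b + (u : nat)%:Z)%R (D + (m-1))).
  have Ei : (b + (u : nat)%:Z + D%:Z = b + (v : nat)%:Z)%R by rewrite /D; lia.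
  split.
  - by rewrite !size_word; split => //; rewrite /D; lia.
  - move=> Eab; have := congr1 (take (m-1)) Eab; rewrite !take_word; [|lia|lia].
    by move=> h; move: (Hneq u); rewrite h eqxx.
  - rewrite /left_k /right_k size_word take_word; last by lia.
    by rewrite drop_word addnK Ei (_ : (D + (m - 1) - D = m - 1)%N) //; lia.
  - rewrite /left_k /right_k size_word take_word; last by lia.
    by rewrite drop_word addnK Ei (_ : (D + (m - 1) - D = m - 1)%N) //; lia.
  - by rewrite !(succ_word_word f L) ?Ht //; lia.
have : ~~ injectiveb g.
  apply/negP => /injectiveP inj; have := leq_card g inj; by rewrite card_ord /NT ltnn.
move=> Hni; have [t1 [t2 hneq Heq]] := elimT (injectivePn g) Hni.
case: (ltngtP t1 t2) => h; first by apply: (key t1 t2).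
  by apply: (key t2 t1).
by move/val_inj: h => h; rewrite h eqxx in hneq.
Qed.

Lemma repl_exists p m (f : m.-tuple 'I_p -> 'I_p) L c1 c2 (d i j : int) (D e : nat) :
  (1 <= m)%N -> global_map f L c1 = global_map f L c2 -> c1 d != c2 d ->
  j = (i + D%:Z)%R -> (m <= D)%N ->
  word c1 i (m-1) = word c2 i (m-1) -> word c1 j (m-1) = word c2 j (m-1) ->
  (e < D + (m-1))%N -> (i + e%:Z)%R = d ->
  exists a b, replaceable f a b.
Proof.
move=> hm Ht hd Ej hD Wi Wj he Ed.
exists (word c1 i (D + (m-1))), (word c2 i (D + (m-1))).
split.
- by rewrite !size_word; split => //; lia.
- move=> Eab; have := congr1 (fun s => nth (c1 d) s e) Eab.
  by rewrite /= !nth_word // Ed => h; rewrite h eqxx in hd.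
- by rewrite /left_k !take_word //; lia.
- rewrite /right_k !size_word addnK !drop_word -Ej.
  by rewrite (_ : (D + (m - 1) - D = m - 1)%N) //; lia.
- by rewrite !(succ_word_word f L) ?Ht //; lia.
Qed.

Theorem theorem1 (p m : nat) (f : m.-tuple 'I_p -> 'I_p) (L R : nat) :
  (2 <= p)%N -> (2 <= m)%N -> (L + 1 + R)%N = m ->
  (injective (global_map f L) <->
   (~ (exists a b : seq 'I_p, replaceable f a b)) /\
   (~ (exists a b : seq 'I_p, periodic_pair f a b))).
Proof.
move=> hp hm hL; have hm1 : (1 <= m)%N by lia.
split.
  move=> inj; pose a0 : 'I_p := Ordinal (ltnW hp).
  split => -[a [b H]].
    exact: (repl_not_inj a0 hm1 H inj).
  exact: (per_not_inj a0 hm1 H inj).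
move=> [NR NP] c1 c2 H; apply: functional_extensionality => d.
case: (eqVneq (c1 d) (c2 d)) => // hd; exfalso.
set N := NT p m.
case: (boolP [exists t : 'I_N.+1,
   word c1 (d + 1 + (t : nat)%:Z)%R (m-1) == word c2 (d + 1 + (t : nat)%:Z)%R (m-1)])
  => [/existsP [t2 /eqP Ht2] | /existsPn Hn]; last first.
  by apply: NP; apply: (per_exists hm1 H Hn).
case: (boolP [exists t : 'I_N.+1,
   word c1 (d - (m - 1)%:Z - N%:Z + (t : nat)%:Z)%R (m-1) ==
   word c2 (d - (m - 1)%:Z - N%:Z + (t : nat)%:Z)%R (m-1)])
  => [/existsP [t1 /eqP Ht1] | /existsPn Hn]; last first.
  by apply: NP; apply: (per_exists hm1 H Hn).
apply: NR.
have ht1 := ltn_ord t1.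
apply: (@repl_exists p m f L c1 c2 d _ _ (N - t1 + m + t2) (N - t1 + (m - 1))
          hm1 H hd _ _ Ht1 Ht2); try lia.
Qed.
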